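(* Let $\varphi:\mathbb{T}^1\times I_0\to\mathbb{T}^1\times I_0$, $\varphi(\theta,x)=(g(\theta),f(\theta,x))$, be a $C^3$ partially hyperbolic skew-product with $g$ a uniformly expanding smooth circle map. There exist $\alpha>0$ and $n_0\in\mathbb{N}$ such that if $\widehat X$ is an $\alpha$-curve and $\varphi^n(\widehat X)$ is the graph of a $C^1$ map, then $\varphi^n(\widehat X)$ is an $\alpha$-curve, provided $n\ge n_0$. Moreover, there exists $C_1=C_1(\alpha)$ such that if $\widehat X$ is an $\alpha$-curve then $\varphi^n(\widehat X)$ is a $C_1$-curve for all $n$, provided that $\varphi^n(\widehat X)$ is a graph.
   Context: Partial hyperbolicity: there exist $C>0$, $0<\sigma<1$ with $\prod_{i=0}^{n-1}|\partial_x f(\varphi^i(\theta,x))|\,/\,|\partial_\theta g^n(\theta)|\le C\sigma^n$ for all $(\theta,x)$ and $n$. For $t>0$, a set $\widehat X\subset\mathbb{T}^1\times I_0$ is a $t$-curve if there are an interval $J\subset\mathbb{T}^1$ and a $C^1$ map $X:J\to I_0$ with $\widehat X=\operatorname{graph}(X)$ and $|X'(\theta)|\le t$ for all $\theta\in J$. *)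

(* Defs.v *)
From Stdlib Require Import Reals Lra Lia ZArith.
From Coquelicot Require Import Coquelicot.
Open Scope R_scope.

(* Points of T^1 x R are represented by pairs (theta, x) in R x R, with theta
   read modulo 1.  Subsets of T^1 x I_0 are predicates on R x R that are
   1-periodic in theta (all sets built below are). *)

Definition cont2 (F : R -> R -> R) : Prop :=
  forall th x eps, 0 < eps -> exists delta, 0 < delta /\
    forall th' x', Rabs (th' - th) < delta -> Rabs (x' - x) < delta ->
      Rabs (F th' x' - F th x) < eps.

Definition dth (F : R -> R -> R) : R -> R -> R :=
  fun th x => Derive (fun t => F t x) th.
Definition dx (F : R -> R -> R) : R -> R -> R :=
  fun th x => Derive (fun y => F th y) x.

Fixpoint Ck2 (k : nat) (F : R -> R -> R) : Prop :=
  match k with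
  | O => cont2 F
  | S k' => cont2 F /\
      (forall th x, ex_derive (fun t => F t x) th /\ ex_derive (fun y => F th y) x) /\
      Ck2 k' (dth F) /\ Ck2 k' (dx F)
  end.

Definition phi (G : R -> R) (f : R -> R -> R) (p : R * R) : R * R :=
  (G (fst p), f (fst p) (snd p)).

Definition phin (G : R -> R) (f : R -> R -> R) (n : nat) : R * R -> R * R :=
  Nat.iter n (phi G f).

Fixpoint fiber_prod (G : R -> R) (f : R -> R -> R) (n : nat) (p : R * R) : R :=
  match n with
  | O => 1
  | S m => fiber_prod G f m p *
           Rabs (dx f (fst (phin G f m p)) (snd (phin G f m p)))
  end.

(* Intervals of T^1: (connected) intervals of R injecting into R/Z. *)
Definition is_interval (J : R -> Prop) : Prop :=
  forall u v w, J u -> J w -> u <= v <= w -> J v.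

Definition inj_mod1 (J : R -> Prop) : Prop :=
  forall u v (k : Z), J u -> J v -> v = u + IZR k -> k = 0%Z.

Definition C1_on (J : R -> Prop) (X : R -> R) : Prop :=
  (forall s, J s -> ex_derive X s) /\
  (forall s, J s -> forall eps, 0 < eps -> exists delta, 0 < delta /\
     forall s', J s' -> Rabs (s' - s) < delta ->
       Rabs (Derive X s' - Derive X s) < eps).

Definition graph (J : R -> Prop) (X : R -> R) : R * R -> Prop :=
  fun p => exists s (k : Z), J s /\ fst p = s + IZR k /\ snd p = X s.

Definition C1_graph (a b : R) (S : R * R -> Prop) : Prop :=
  exists (J : R -> Prop) (X : R -> R),
    is_interval J /\ inj_mod1 J /\ C1_on J X /\
    (forall s, J s -> a <= X s <= b) /\
    (forall p, S p <-> graph J X p).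

Definition t_curve (a b t : R) (S : R * R -> Prop) : Prop :=
  exists (J : R -> Prop) (X : R -> R),
    is_interval J /\ inj_mod1 J /\ C1_on J X /\
    (forall s, J s -> a <= X s <= b) /\
    (forall s, J s -> Rabs (Derive X s) <= t) /\
    (forall p, S p <-> graph J X p).

Definition img (G : R -> R) (f : R -> R -> R) (n : nat) (S : R * R -> Prop)
  : R * R -> Prop :=
  fun p => exists q (k : Z), S q /\
    fst p = fst (phin G f n q) + IZR k /\ snd p = snd (phin G f n q).

(* Main.v *)
Require Import Defs.
From Stdlib Require Import Reals Lra Lia ZArith Classical.
From Coquelicot Require Import Coquelicot.
Open Scope R_scope.

Lemma cont2_2d F : cont2 F -> forall x y, continuity_2d_pt F x y.
Proof.
  intros H x y eps.
  destruct (H x y eps (cond_pos eps)) as [d [Hd Hd']].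
  exists (mkposreal d Hd). intros u v Hu Hv. apply Hd'; assumption.
Qed.

Lemma Ck2_diff : forall k F, Ck2 k F -> forall x y, ex_diff_n F k x y.
Proof.
  induction k as [|k IH]; intros F HF x y.
  - simpl. split; [apply cont2_2d; exact HF | exact I].
  - destruct HF as [Hc [Hd [H1 H2]]].
    simpl. split; [apply cont2_2d; exact Hc|].
    destruct (Hd x y) as [Hd1 Hd2].
    split; [exact Hd1|]. split; [exact Hd2|].
    split; [apply (IH _ H1) | apply (IH _ H2)].
Qed.

Lemma diff_f F : Ck2 3 F -> forall x y, differentiable_pt_lim F x y (dth F x y) (dx F x y).
Proof.
  intros HF x y.
  assert (H2 : forall x y, ex_diff_n F 2 x y).
  { intros; apply ex_diff_n_m with 3%nat; [lia|]. apply Ck2_diff; exact HF. }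
  destruct (Taylor_Lagrange_2d F 1 x y) as [D [d Hd]].
  { exists (mkposreal 1 Rlt_0_1). intros; apply H2. }
  intros eps.
  assert (Hp : 0 < Rmin d (eps / (Rabs D + 1))).
  { apply Rmin_pos; [apply cond_pos|]. apply Rdiv_lt_0_compat; [apply cond_pos|].
    pose proof (Rabs_pos D); lra. }
  exists (mkposreal _ Hp). intros u v Hu Hv. simpl in Hu, Hv.
  assert (Hu1 : Rabs (u - x) < d) by (eapply Rlt_le_trans; [exact Hu| apply Rmin_l]).
  assert (Hv1 : Rabs (v - y) < d) by (eapply Rlt_le_trans; [exact Hv| apply Rmin_l]).
  specialize (Hd u v Hu1 Hv1).
  unfold DL_pol, differential in Hd. simpl in Hd.
  unfold partial_derive in Hd. simpl in Hd.
  assert (C00 : Binomial.C 0 0 = 1) by (unfold Binomial.C; simpl; field).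
  assert (C10 : Binomial.C 1 0 = 1) by (unfold Binomial.C; simpl; field).
  assert (C11 : Binomial.C 1 1 = 1) by (unfold Binomial.C; simpl; field).
  rewrite C00, C10, C11 in Hd.
  set (m := Rmax (Rabs (u - x)) (Rabs (v - y))) in *.
  assert (Hm0 : 0 <= m) by (unfold m; eapply Rle_trans; [apply Rabs_pos|apply Rmax_l]).
  assert (Hm : m < eps / (Rabs D + 1)).
  { unfold m. apply Rmax_lub_lt; [eapply Rlt_le_trans; [exact Hu| apply Rmin_r]
      |eapply Rlt_le_trans; [exact Hv| apply Rmin_r]]. }
  assert (HDm : (Rabs D + 1) * m <= eps).
  { pose proof (Rabs_pos D).
    apply Rmult_lt_compat_l with (r := Rabs D + 1) in Hm; [|lra].
    field_simplify in Hm; lra. }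
  unfold dth, dx.
  replace (F u v - F x y - (Derive (fun t : R => F t y) x * (u - x) + Derive (fun y0 : R => F x y0) y * (v - y)))
    with (F u v - (1 * F x y * 1 * 1 / 1 + (1 * Derive (fun x0 : R => F x x0) y * 1 * ((v - y) * 1) + 1 * Derive (fun x : R => F x y) x * ((u - x) * 1) * 1) / 1)) by field.
  eapply Rle_trans; [exact Hd|].
  fold m.
  pose proof (Rle_abs D).
  pose proof (Rabs_pos D).
  apply Rle_trans with ((Rabs D + 1) * m * m); [nra|].
  nra.
Qed.


Lemma compact_bound lo hi (P : R -> R -> Prop) :
  (forall y y' t, P y t -> y <= y' -> P y' t) ->
  (forall t, lo <= t <= hi -> exists del y, 0 < del /\
      forall t', Rabs (t' - t) < del -> P y t') ->
  exists y, forall t, lo <= t <= hi -> P y t.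
Proof.
  intros Hmon Hloc.
  destruct (Rlt_or_le hi lo) as [Hlt|Hle].
  { exists 0. intros t Ht; lra. }
  set (E := fun s => lo <= s <= hi /\ exists y, forall t, lo <= t <= s -> P y t).
  assert (HE0 : E lo).
  { split; [lra|]. destruct (Hloc lo ltac:(lra)) as [del [y [Hd Hy]]].
    exists y. intros t Ht. apply Hy. replace (t - lo) with 0 by lra.
    rewrite Rabs_R0; lra. }
  assert (Hb : bound E).
  { exists hi. intros s [Hs _]; lra. }
  destruct (completeness E Hb (ex_intro _ lo HE0)) as [m [Hub Hlub]].
  assert (Hm1 : lo <= m) by (apply Hub; exact HE0).
  assert (Hm2 : m <= hi) by (apply Hlub; intros s [Hs _]; lra).
  destruct (Hloc m ltac:(lra)) as [del [y0 [Hd Hy0]]].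
  assert (Hs : exists s, E s /\ m - del < s).
  { apply NNPP. intro Hn.
    assert (m <= m - del); [|lra].
    apply Hlub. intros s Hs. apply Rnot_lt_le. intro Hc. apply Hn. exists s; auto. }
  destruct Hs as [s [[Hs1 [y1 Hy1]] Hs2]].
  assert (Hs' : E (Rmin (m + del/2) hi)).
  { split. { split; [apply Rmin_glb; lra| apply Rmin_r]. }
    exists (Rmax y0 y1). intros t Ht.
    destruct (Rle_or_lt t s) as [Hts|Hts].
    - apply Hmon with y1; [apply Hy1; lra| apply Rmax_r].
    - apply Hmon with y0; [|apply Rmax_l]. apply Hy0.
      assert (t <= m + del/2) by (eapply Rle_trans; [apply Ht| apply Rmin_l]).
      assert (s <= m) by (apply Hub; split; [lra| exists y1; exact Hy1]).
      apply Rabs_def1; lra. }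
  assert (Hle2 : Rmin (m + del/2) hi <= m) by (apply Hub; exact Hs').
  assert (Heq : Rmin (m + del/2) hi = hi).
  { unfold Rmin in *. destruct (Rle_dec (m + del/2) hi); lra. }
  rewrite Heq in Hs'. destruct Hs' as [_ [y Hy]]. exists y. exact Hy.
Qed.

Lemma bound_2d (h : R -> R -> R) (lo hi a b : R) : cont2 h ->
  exists M, forall th x, lo <= th <= hi -> a <= x <= b -> Rabs (h th x) <= M.
Proof.
  intros Hc.
  assert (Hin : forall th, exists y, forall x, a <= x <= b ->
     0 < y /\ forall th', Rabs (th' - th) < / y -> Rabs (h th' x) <= y).
  { intros th.
    apply (compact_bound a b (fun y x => 0 < y /\ forall th', Rabs (th' - th) < / y -> Rabs (h th' x) <= y)).
    - intros y y' t [Hy H] Hyy. split; [lra|]. intros th' Hth.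
      assert (/ y' <= / y) by (apply Rinv_le_contravar; lra).
      specialize (H th' ltac:(lra)). lra.
    - intros x _. destruct (Hc th x 1 Rlt_0_1) as [d [Hd Hd']].
      exists d, (Rmax (Rabs (h th x) + 1) (/ d)). split; [exact Hd|].
      intros x' Hx'.
      assert (Hy : 0 < Rmax (Rabs (h th x) + 1) (/ d)).
      { eapply Rlt_le_trans; [|apply Rmax_l]. pose proof (Rabs_pos (h th x)); lra. }
      split; [exact Hy|]. intros th' Hth.
      assert (/ Rmax (Rabs (h th x) + 1) (/ d) <= d).
      { rewrite <- (Rinv_inv d) at 2. apply Rinv_le_contravar.
        - apply Rinv_0_lt_compat; lra.
        - apply Rmax_r. }
      specialize (Hd' th' x' ltac:(lra) Hx').
      eapply Rle_trans; [|apply Rmax_l].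
      pose proof (Rabs_triang_inv (h th' x') (h th x)). lra. }
  destruct (compact_bound lo hi (fun y th => forall x, a <= x <= b -> Rabs (h th x) <= y)) as [M HM].
  - intros y y' t H Hyy x Hx. specialize (H x Hx); lra.
  - intros th _. destruct (Hin th) as [y Hy].
    destruct (Rlt_or_le b a) as [Hba|Hab].
    + exists 1, 0. split; [lra|]. intros; lra.
    + destruct (Hy a ltac:(lra)) as [Hy0 _].
      exists (/ y), y. split; [apply Rinv_0_lt_compat; lra|].
      intros th' Hth x Hx. apply (proj2 (Hy x Hx)). exact Hth.
  - exists M. intros th x Hth Hx. apply HM; assumption.
Qed.


Lemma Nshift (F : R -> R) c : (forall t, F (t + 1) = F t + c) ->
  forall n t, F (t + INR n) = F t + INR n * c.
Proof.
  intros H n. induction n as [|n IH]; intros t.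
  - simpl. rewrite Rplus_0_r. ring.
  - rewrite S_INR. replace (t + (INR n + 1)) with ((t + INR n) + 1) by ring.
    rewrite H, IH. ring.
Qed.

Lemma Zshift (F : R -> R) c : (forall t, F (t + 1) = F t + c) ->
  forall k t, F (t + IZR k) = F t + IZR k * c.
Proof.
  intros H k t. destruct k as [|p|p].
  - simpl. rewrite Rplus_0_r. ring.
  - replace (IZR (Z.pos p)) with (INR (Pos.to_nat p)).
    + apply Nshift; exact H.
    + rewrite INR_IZR_INZ. f_equal. lia.
  - replace (IZR (Z.neg p)) with (- INR (Pos.to_nat p)).
    + pose proof (Nshift F c H (Pos.to_nat p) (t + - INR (Pos.to_nat p))) as E.
      replace (t + - INR (Pos.to_nat p) + INR (Pos.to_nat p)) with t in E by ring.
      rewrite E. ring.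
    + rewrite INR_IZR_INZ. rewrite <- opp_IZR. f_equal. lia.
Qed.

Lemma dth_periodic f : (forall th x, f (th + 1) x = f th x) ->
  (forall th x, ex_derive (fun t => f t x) th) ->
  forall th x, dth f (th + 1) x = dth f th x.
Proof.
  intros Hp Hd th x. unfold dth.
  destruct (Hd (th + 1) x) as [D HD].
  replace (Derive (fun t => f t x) (th + 1)) with D by (symmetry; apply is_derive_unique; exact HD).
  symmetry. apply is_derive_unique.
  assert (H1 : is_derive (fun s => s + 1) th 1).
  { auto_derive; [exact I| ring]. }
  pose proof (is_derive_comp (fun t => f t x) (fun s => s + 1) th D 1 HD H1) as H2.
  simpl in H2.
  replace D with (scal 1 D) by (unfold scal; simpl; unfold mult; simpl; ring).
  eapply is_derive_ext; [|exact H2]. intros t. simpl. apply Hp.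
Qed.

Lemma periodic_Z (F : R -> R) : (forall t, F (t + 1) = F t) ->
  forall k t, F (t + IZR k) = F t.
Proof.
  intros H k t. rewrite (Zshift F 0); [ring|]. intros; rewrite H; ring.
Qed.

Lemma reduce01 (th : R) : exists th0 k, 0 <= th0 <= 1 /\ th = th0 + IZR k.
Proof.
  destruct (archimed th) as [H1 H2].
  exists (th - IZR (up th) + 1), (up th - 1)%Z.
  rewrite minus_IZR. simpl. split; [lra| ring].
Qed.


Lemma phin_S G f n p : phin G f (S n) p = phin G f n (phi G f p).
Proof. unfold phin. apply Nat.iter_succ_r. Qed.

Lemma fst_phin G f n p : fst (phin G f n p) = Nat.iter n G (fst p).
Proof. induction n as [|n IH]; [reflexivity|].
  change (phin G f (S n) p) with (phi G f (phin G f n p)). simpl. rewrite IH. reflexivity. Qed.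

Lemma phin_range G f a b : (forall th x, a <= x <= b -> a <= f th x <= b) ->
  forall n p, a <= snd p <= b -> a <= snd (phin G f n p) <= b.
Proof.
  intros Hf n. induction n as [|n IH]; intros p Hp; [exact Hp|].
  change (phin G f (S n) p) with (phi G f (phin G f n p)). simpl. apply Hf. apply IH; exact Hp.
Qed.

Lemma fp_succ_l G f n p : fiber_prod G f (S n) p =
  Rabs (dx f (fst p) (snd p)) * fiber_prod G f n (phi G f p).
Proof.
  revert p. induction n as [|n IH]; intros p.
  - simpl. ring.
  - change (fiber_prod G f (S (S n)) p) with
      (fiber_prod G f (S n) p * Rabs (dx f (fst (phin G f (S n) p)) (snd (phin G f (S n) p)))).
    rewrite IH. rewrite phin_S. simpl. ring.
Qed.

Section Iter.
Variable G : R -> R.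
Hypothesis EG : forall t, ex_derive G t.

Lemma iter_ex_derive : forall n t, ex_derive (Nat.iter n G) t.
Proof.
  induction n as [|n IH]; intros t.
  - exists 1. simpl. apply (is_derive_id (K:=R_AbsRing)).
  - destruct (IH t) as [d Hd]. destruct (EG (Nat.iter n G t)) as [e He].
    exists (scal d e). apply (is_derive_comp G (Nat.iter n G) t e d He Hd).
Qed.

Lemma Diter_S : forall n t, Derive (Nat.iter (S n) G) t = Derive (Nat.iter n G) (G t) * Derive G t.
Proof.
  intros n t. apply is_derive_unique.
  destruct (iter_ex_derive n (G t)) as [d Hd]. destruct (EG t) as [e He].
  pose proof (is_derive_comp (Nat.iter n G) G t d e Hd He) as H.
  rewrite (is_derive_unique _ _ _ Hd), (is_derive_unique _ _ _ He).
  replace (d * e) with (scal e d) by (unfold scal; simpl; unfold mult; simpl; ring).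
  eapply is_derive_ext; [|exact H]. intros x. simpl. symmetry. apply Nat.iter_succ_r.
Qed.

Lemma Diter_0 : forall t, Derive (Nat.iter 0 G) t = 1.
Proof. intros t. apply Derive_id. Qed.
End Iter.


Section Orbit.
Variables (G : R -> R) (f : R -> R -> R).
Hypothesis EG : forall t, ex_derive G t.
Hypothesis Hdiff : forall x y, differentiable_pt_lim f x y (dth f x y) (dx f x y).
Hypothesis HGnz : forall t, Derive G t <> 0.

Definition T (p : R * R) (v : R) : R :=
  (dth f (fst p) (snd p) + dx f (fst p) (snd p) * v) / Derive G (fst p).

Fixpoint Tn (n : nat) (p : R * R) (v : R) : R :=
  match n with O => v | S m => Tn m (phi G f p) (T p v) end.

Fixpoint Ln (n : nat) (p : R * R) : R :=
  match n with O => 1 | S m => Ln m (phi G f p) * dx f (fst p) (snd p) / Derive G (fst p) end.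

Lemma deriv_orbit : forall n (u w : R -> R) (t du dw : R), is_derive u t du -> is_derive w t dw -> du <> 0 ->
  is_derive (fun s => snd (phin G f n (u s, w s))) t
    (Derive (Nat.iter n G) (u t) * du * Tn n (u t, w t) (dw / du)).
Proof.
  induction n as [|n IH]; intros u w t du dw Hu Hw Hdu.
  - simpl. rewrite Diter_0. replace (1 * du * (dw / du)) with dw by (field; exact Hdu). exact Hw.
  - assert (Hu1 : is_derive (fun s => G (u s)) t (du * Derive G (u t))).
    { destruct (EG (u t)) as [e He].
      rewrite (is_derive_unique _ _ _ He).
      pose proof (is_derive_comp G u t e du He Hu) as H. exact H. }
    assert (Hw1 : is_derive (fun s => f (u s) (w s)) t
                    (dth f (u t) (w t) * du + dx f (u t) (w t) * dw)).
    { apply is_derive_Reals. apply derivable_pt_lim_comp_2d.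
      - apply Hdiff.
      - apply is_derive_Reals; exact Hu.
      - apply is_derive_Reals; exact Hw. }
    assert (Hdu1 : du * Derive G (u t) <> 0) by (apply Rmult_integral_contrapositive; split; auto).
    pose proof (IH _ _ t _ _ Hu1 Hw1 Hdu1) as H.
    eapply is_derive_ext; [intros s; rewrite phin_S; reflexivity|].
    simpl phi in H |- *.
    rewrite Diter_S by exact EG.
    replace ((dth f (u t) (w t) * du + dx f (u t) (w t) * dw) / (du * Derive G (u t)))
      with (T (u t, w t) (dw / du)) in H by (unfold T; simpl; field; split; auto).
    replace (Derive (Nat.iter n G) (G (u t)) * Derive G (u t) * du *
       Tn (S n) (u t, w t) (dw / du))
      with (Derive (Nat.iter n G) (G (u t)) * (du * Derive G (u t)) *
       Tn n (G (u t), f (u t) (w t)) (T (u t, w t) (dw / du))) by (change (Tn (S n) (u t, w t) (dw/du)) with (Tn n (G (u t), f (u t) (w t)) (T (u t, w t) (dw/du))); ring).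
    exact H.
Qed.
End Orbit.

Section Bounds.
Variables (G : R -> R) (f : R -> R -> R) (a b c lam C sigma M : R).
Hypothesis EG : forall t, ex_derive G t.
Hypothesis HDnz : forall n t, Derive (Nat.iter n G) t <> 0.
Hypothesis Hf : forall th x, a <= x <= b -> a <= f th x <= b.
Hypothesis Hhyp : forall (n : nat) th x, a <= x <= b ->
       fiber_prod G f n (th, x) / Rabs (Derive (Nat.iter n G) th) <= C * sigma ^ n.
Hypothesis HM : forall th x, a <= x <= b -> Rabs (dth f th x) <= M.
Hypothesis Hcl : 0 < c * lam.
Hypothesis Hg : forall t, c * lam <= Rabs (Derive G t).
Hypothesis Hsig : 0 < sigma < 1.
Hypothesis HC : 0 < C.

Lemma HGnz : forall t, Derive G t <> 0.
Proof. intros t H. specialize (Hg t). rewrite H, Rabs_R0 in Hg. lra. Qed.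

Lemma Ln_eq : forall n p, Rabs (Ln G f n p) = fiber_prod G f n p / Rabs (Derive (Nat.iter n G) (fst p)).
Proof.
  induction n as [|n IH]; intros p.
  - simpl. rewrite Diter_0, Rabs_R1. field.
  - simpl Ln. rewrite fp_succ_l, Diter_S by exact EG.
    unfold Rdiv. rewrite !Rabs_mult, Rabs_inv, IH.
    pose proof (HGnz (fst p)). pose proof (HDnz n (G (fst p))).
    simpl fst. field. split; apply Rabs_no_R0; auto.
Qed.

Lemma Ln_bound : forall n p, a <= snd p <= b -> Rabs (Ln G f n p) <= C * sigma ^ n.
Proof.
  intros n [th x] Hp. rewrite Ln_eq. apply Hhyp. exact Hp.
Qed.

Lemma Tn_bound : forall n p v, a <= snd p <= b ->
  Rabs (Tn G f n p v) <= Rabs (Ln G f n p) * Rabs v + (M * C / (c * lam)) * (1 - sigma ^ n) / (1 - sigma).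
Proof.
  induction n as [|n IH]; intros p v Hp.
  - simpl. rewrite Rabs_R1. lra.
  - simpl Tn. simpl Ln.
    assert (Hp' : a <= snd (phi G f p) <= b) by (simpl; apply Hf; exact Hp).
    specialize (IH (phi G f p) (T G f p v) Hp').
    eapply Rle_trans; [exact IH|].
    pose proof (Ln_bound n _ Hp') as HL.
    set (L := Ln G f n (phi G f p)) in *.
    set (A := dx f (fst p) (snd p)).
    set (B := dth f (fst p) (snd p)).
    set (g := Derive G (fst p)).
    assert (Hgp : c * lam <= Rabs g) by apply Hg.
    assert (HB : Rabs B <= M) by (apply HM; exact Hp).
    assert (HT : Rabs (T G f p v) <= Rabs B / Rabs g + Rabs A * Rabs v / Rabs g).
    { unfold T. fold A B g. unfold Rdiv. rewrite Rabs_mult, Rabs_inv.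
      pose proof (Rabs_triang B (A * v)). rewrite Rabs_mult in H.
      assert (0 < / Rabs g) by (apply Rinv_0_lt_compat; lra).
      nra. }
    assert (E1 : Rabs (L * A / g) * Rabs v = Rabs L * (Rabs A * Rabs v / Rabs g)).
    { unfold Rdiv. rewrite !Rabs_mult, Rabs_inv. ring. }
    rewrite E1.
    assert (HBg : Rabs B / Rabs g <= M / (c * lam)).
    { unfold Rdiv. apply Rle_trans with (Rabs B * / (c * lam)).
      - apply Rmult_le_compat_l; [apply Rabs_pos|]. apply Rinv_le_contravar; lra.
      - apply Rmult_le_compat_r; [left; apply Rinv_0_lt_compat; lra| exact HB]. }
    assert (HLpos := Rabs_pos L).
    assert (HBg0 : 0 <= Rabs B / Rabs g) by (unfold Rdiv; apply Rmult_le_pos; [apply Rabs_pos| left; apply Rinv_0_lt_compat; lra]).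
    assert (Hs : C * sigma ^ n * (M / (c * lam)) + M * C / (c * lam) * (1 - sigma ^ n) / (1 - sigma)
               = M * C / (c * lam) * (1 - sigma ^ S n) / (1 - sigma)).
    { assert (c <> 0) by (intro Hc0; rewrite Hc0 in Hcl; lra).
      assert (lam <> 0) by (intro Hc0; rewrite Hc0 in Hcl; lra).
      simpl. field. repeat split; lra. }
    rewrite <- Hs.
    assert (Rabs L * (Rabs B / Rabs g) <= C * sigma ^ n * (M / (c * lam))).
    { apply Rmult_le_compat; auto. }
    assert (Rabs L * Rabs (T G f p v) <= Rabs L * (Rabs B / Rabs g + Rabs A * Rabs v / Rabs g)).
    { apply Rmult_le_compat_l; auto. }
    nra.
Qed.
End Bounds.


Lemma ballR (x e y : R) : ball x e y <-> Rabs (y - x) < e.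
Proof. reflexivity. Qed.

Lemma noint (z1 z2 : R) (k : Z) : 0 < z2 - z1 < 1 -> z2 - z1 = IZR k -> False.
Proof.
  intros [H1 H2] E. rewrite E in H1, H2.
  apply lt_IZR in H1. apply lt_IZR in H2. lia.
Qed.

Lemma diam J : is_interval J -> inj_mod1 J -> forall u w, J u -> J w -> u <= w -> w - u < 1.
Proof.
  intros Hi Hinj u w Hu Hw Huw. apply Rnot_le_lt. intro H.
  assert (J (u + 1)) by (apply (Hi u (u+1) w); auto; lra).
  assert (1%Z = 0%Z) by (apply (Hinj u (u + 1) 1%Z); auto).
  discriminate.
Qed.

Lemma pow_le1 x n : 0 <= x <= 1 -> x ^ n <= 1.
Proof. intros Hx. induction n as [|n IH]; simpl; [lra|]. pose proof (pow_le x n (proj1 Hx)). nra. Qed.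

Lemma Eshift (x y k : R) : x + k - (y + k) = x - y.
Proof. ring. Qed.

Section Geo.
Variables (G : R -> R) (f : R -> R -> R) (a b c lam C sigma M : R) (d : Z).
Hypothesis EG : forall t, ex_derive G t.
Hypothesis HDnz : forall n t, Derive (Nat.iter n G) t <> 0.
Hypothesis Hf : forall th x, a <= x <= b -> a <= f th x <= b.
Hypothesis Hhyp : forall (n : nat) th x, a <= x <= b ->
       fiber_prod G f n (th, x) / Rabs (Derive (Nat.iter n G) th) <= C * sigma ^ n.
Hypothesis HM : forall th x, a <= x <= b -> Rabs (dth f th x) <= M.
Hypothesis HM0 : 0 <= M.
Hypothesis Hcl : 0 < c * lam.
Hypothesis Hg : forall t, c * lam <= Rabs (Derive G t).
Hypothesis Hsig : 0 < sigma < 1.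
Hypothesis HC : 0 < C.
Hypothesis Hdiff : forall x y, differentiable_pt_lim f x y (dth f x y) (dx f x y).
Hypothesis Hper : forall th x, f (th + 1) x = f th x.
Hypothesis HGd : forall th, G (th + 1) = G th + IZR d.

Definition Kc := M * C / (c * lam) / (1 - sigma).

Lemma Kc_pos : 0 <= Kc.
Proof.
  unfold Kc. unfold Rdiv. apply Rmult_le_pos; [|left; apply Rinv_0_lt_compat; lra].
  apply Rmult_le_pos; [nra|left; apply Rinv_0_lt_compat; lra].
Qed.

Lemma phin_shift : forall n k t x, exists k', phin G f n (t + IZR k, x) =
  (fst (phin G f n (t, x)) + IZR k', snd (phin G f n (t, x))).
Proof.
  induction n as [|n IH]; intros k t x.
  - exists k. reflexivity.
  - destruct (IH k t x) as [k' E].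
    change (phin G f (S n) (t + IZR k, x)) with (phi G f (phin G f n (t + IZR k, x))).
    change (phin G f (S n) (t, x)) with (phi G f (phin G f n (t, x))).
    rewrite E. exists (k' * d)%Z. unfold phi. simpl.
    rewrite (Zshift G (IZR d) HGd k'), mult_IZR.
    rewrite (periodic_Z (fun s => f s (snd (phin G f n (t, x))))); [reflexivity|].
    intros; apply Hper.
Qed.

Lemma preimage n S J X z y : (forall p, S p <-> graph J X p) -> img G f n S (z, y) ->
  exists th K, J th /\ z = Nat.iter n G th + IZR K /\ y = snd (phin G f n (th, X th)).
Proof.
  intros HS [q [k [Hq [E1 E2]]]].
  apply HS in Hq. destruct Hq as [s [kq [Hs [Eq1 Eq2]]]].
  destruct q as [q1 q2]. simpl in Eq1, Eq2. subst q1 q2.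
  destruct (phin_shift n kq s (X s)) as [k' E]. rewrite E in E1, E2. simpl in E1, E2.
  exists s, (k' + k)%Z. split; [exact Hs|]. split.
  - simpl in E1. rewrite E1, plus_IZR, fst_phin. simpl. ring.
  - exact E2.
Qed.

Lemma good_bound n t0 S J X J' X' :
  C1_on J X -> (forall s, J s -> a <= X s <= b) -> (forall s, J s -> Rabs (Derive X s) <= t0) ->
  (forall p, S p <-> graph J X p) ->
  C1_on J' X' -> inj_mod1 J' -> (forall p, img G f n S p <-> graph J' X' p) ->
  forall s'' rho th th1 th2 K, 0 < rho -> (forall z, Rabs (z - s'') < rho -> J' z) ->
  is_interval J -> J th1 -> J th2 -> th1 < th < th2 -> s'' = Nat.iter n G th + IZR K ->
  Rabs (Derive X' s'') <= C * sigma ^ n * t0 + Kc.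
Proof.
  intros [HXd HXc] HXab HXb HS [HX'd HX'c] Hinj' Himg s'' rho th th1 th2 K Hrho Hball HJi Hth1 Hth2 Hth Es.
  assert (HJth : J th) by (apply (HJi th1 th th2); auto; lra).
  assert (HJ's : J' s'') by (apply Hball; rewrite Rminus_diag, Rabs_R0; exact Hrho).
  set (H := fun z => snd (phin G f n (z, X z))).
  assert (Hc : locally th (fun z => ball (Nat.iter n G th) rho (Nat.iter n G z))).
  { pose proof (ex_derive_continuous _ _ (iter_ex_derive G EG n th)) as Hc.
    apply (proj1 (filterlim_locally _ _) Hc (mkposreal rho Hrho)). }
  assert (HlJ : locally th J).
  { assert (Hp : 0 < Rmin (th - th1) (th2 - th)) by (apply Rmin_pos; lra).
    exists (mkposreal _ Hp). intros z Hz.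
    assert (Hz' : Rabs (z - th) < Rmin (th - th1) (th2 - th)) by exact Hz.
    apply Rabs_lt_between in Hz'.
    pose proof (Rmin_l (th - th1) (th2 - th)). pose proof (Rmin_r (th - th1) (th2 - th)).
    apply (HJi th1 z th2); auto; lra. }
  assert (Hloc : locally th (fun z => X' (Nat.iter n G z + IZR K) = H z)).
  { eapply filter_imp; [|exact (filter_and _ _ Hc HlJ)].
    intros z [Hz1 Hz2].
    assert (Hz1' : Rabs (Nat.iter n G z - Nat.iter n G th) < rho) by exact Hz1.
    set (u := Nat.iter n G z + IZR K).
    assert (HJ'u : J' u) by (apply Hball; unfold u; rewrite Es; rewrite (Eshift (Nat.iter n G z) (Nat.iter n G th) (IZR K)); exact Hz1').
    assert (Him : img G f n S (u, H z)).
    { exists (z, X z), K. split; [apply HS; exists z, 0%Z; simpl; rewrite Rplus_0_r; auto|].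
      rewrite fst_phin. simpl. split; reflexivity. }
    apply Himg in Him. destruct Him as [s3 [m [Hs3 [E1 E2]]]]. simpl in E1, E2.
    assert (m = 0%Z) by (apply (Hinj' s3 u m Hs3 HJ'u E1)).
    subst m. rewrite Rplus_0_r in E1. rewrite E1. symmetry; exact E2. }
  set (D := Derive (Nat.iter n G) th).
  destruct (HXd th HJth) as [v Hv].
  assert (HD1 : is_derive H th (D * 1 * Tn G f n (th, X th) (v / 1))).
  { apply (deriv_orbit G f EG Hdiff (HGnz G c lam Hcl Hg) n (fun z => z) X th 1 v).
    - apply (is_derive_id (K:=R_AbsRing)).
    - exact Hv.
    - lra. }
  assert (Hi : is_derive (fun z => Nat.iter n G z + IZR K) th D).
  { destruct (iter_ex_derive G EG n th) as [e He].
    assert (e = D) by (unfold D; symmetry; apply is_derive_unique; exact He).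
    subst e.
    pose proof (is_derive_plus _ _ th D zero He (is_derive_const (IZR K) th)) as H2.
    replace D with (plus D zero : R) by (unfold plus, zero; simpl; ring).
    eapply is_derive_ext; [|exact H2]. intros z; reflexivity. }
  destruct (HX'd s'' HJ's) as [w Hw].
  assert (HD2 : is_derive (fun z => X' (Nat.iter n G z + IZR K)) th (scal D w)).
  { rewrite Es in Hw. exact (is_derive_comp X' (fun z => Nat.iter n G z + IZR K) th w D Hw Hi). }
  apply (is_derive_ext_loc _ _ _ _ Hloc) in HD2.
  pose proof (is_derive_unique _ _ _ HD1) as U1.
  pose proof (is_derive_unique _ _ _ HD2) as U2.
  rewrite U1 in U2. unfold scal in U2; simpl in U2; unfold mult in U2; simpl in U2.
  assert (HDn : D <> 0) by apply HDnz.
  assert (Ew : w = Tn G f n (th, X th) (v / 1)).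
  { apply Rmult_eq_reg_l with D; [|exact HDn]. rewrite <- U2. ring. }
  rewrite (is_derive_unique _ _ _ Hw), Ew.
  assert (Hp : a <= snd (th, X th) <= b) by (apply HXab; exact HJth).
  assert (TB : Rabs (Tn G f n (th, X th) (v/1)) <= Rabs (Ln G f n (th, X th)) * Rabs (v/1) + (M * C / (c * lam)) * (1 - sigma ^ n) / (1 - sigma)).
  { eapply Tn_bound; eauto. }
  assert (LB : Rabs (Ln G f n (th, X th)) <= C * sigma ^ n).
  { eapply Ln_bound; eauto. }
  assert (Hv1 : Rabs (v / 1) <= t0).
  { unfold Rdiv. rewrite Rinv_1, Rmult_1_r. rewrite <- (is_derive_unique _ _ _ Hv). apply HXb; exact HJth. }
  assert (Hsn : 0 < sigma ^ n) by (apply pow_lt; lra).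
  assert (Hsn1 : sigma ^ n <= 1) by (apply pow_le1; lra).
  assert (HK0 : 0 <= M * C / (c * lam)) by (unfold Rdiv; apply Rmult_le_pos; [nra| left; apply Rinv_0_lt_compat; lra]).
  assert (Hq : M * C / (c * lam) * (1 - sigma ^ n) / (1 - sigma) <= Kc).
  { unfold Kc. unfold Rdiv. apply Rmult_le_compat_r; [left; apply Rinv_0_lt_compat; lra|].
    nra. }
  assert (Rabs (Ln G f n (th, X th)) * Rabs (v / 1) <= C * sigma ^ n * t0).
  { apply Rmult_le_compat; auto using Rabs_pos. }
  lra.
Qed.
Lemma minmax (J : R -> Prop) th : ~ (exists th1 th2, J th1 /\ J th2 /\ th1 < th < th2) ->
  (forall y, J y -> th <= y) \/ (forall y, J y -> y <= th).
Proof.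
  intros Hn. destruct (classic (exists y, J y /\ y < th)) as [[y [Hy Hyt]]|Hno].
  - right. intros y' Hy'. apply Rnot_lt_le. intro Hc. apply Hn. exists y, y'. auto.
  - left. intros y' Hy'. apply Rnot_lt_le. intro Hc. apply Hno. exists y'. auto.
Qed.

Lemma pair_contra (J : R -> Prop) (F : R -> R) ti tj zi zj Ki Kj :
  zi = F ti + IZR Ki -> zj = F tj + IZR Kj -> 0 < zj - zi < 1 -> J ti -> J tj ->
  ((forall y, J y -> ti <= y) /\ (forall y, J y -> tj <= y)) \/
  ((forall y, J y -> y <= ti) /\ (forall y, J y -> y <= tj)) -> False.
Proof.
  intros Ei Ej Hz Hi Hj Hmm.
  assert (ti = tj).
  { destruct Hmm as [[A B]|[A B]]; apply Rle_antisym; auto. }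
  subst tj. apply (noint zi zj (Kj - Ki)); auto.
  rewrite Ei, Ej, minus_IZR. ring.
Qed.

Lemma density n S J X J' X' : is_interval J -> (forall p, S p <-> graph J X p) ->
  (forall p, img G f n S p <-> graph J' X' p) ->
  forall p q, p < q -> q - p < 1 -> (forall z, p < z < q -> J' z) ->
  exists s'' rho th th1 th2 K, p < s'' < q /\ 0 < rho /\
    (forall z, Rabs (z - s'') < rho -> J' z) /\ J th1 /\ J th2 /\ th1 < th < th2 /\
    s'' = Nat.iter n G th + IZR K.
Proof.
  intros HJi HS Himg p q Hpq Hq1 HJ'.
  set (h := (q - p) / 4).
  assert (Hh : 0 < h) by (unfold h; lra).
  assert (Hpre : forall i, 1 <= i <= 3 -> exists th K, J th /\ p + i * h = Nat.iter n G th + IZR K).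
  { intros i Hi.
    assert (Hz : J' (p + i * h)) by (apply HJ'; unfold h in *; nra).
    assert (Hg' : graph J' X' (p + i * h, X' (p + i * h))) by (exists (p + i * h), 0%Z; simpl; rewrite Rplus_0_r; auto).
    apply Himg in Hg'.
    destruct (preimage n S J X _ _ HS Hg') as [th [K [HJ [E1 _]]]].
    exists th, K. auto. }
  assert (Hgood : forall i th K, 1 <= i <= 3 -> J th -> p + i * h = Nat.iter n G th + IZR K ->
     (exists th1 th2, J th1 /\ J th2 /\ th1 < th < th2) ->
     exists s'' rho th th1 th2 K, p < s'' < q /\ 0 < rho /\
    (forall z, Rabs (z - s'') < rho -> J' z) /\ J th1 /\ J th2 /\ th1 < th < th2 /\
    s'' = Nat.iter n G th + IZR K).
  { intros i th K Hi HJ E [th1 [th2 [H1 [H2 H3]]]].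
    exists (p + i * h), h, th, th1, th2, K.
    split; [unfold h in *; nra|]. split; [exact Hh|]. split; [|auto].
    intros z Hz. apply Rabs_lt_between in Hz. apply HJ'. unfold h in *; nra. }
  destruct (Hpre 1 ltac:(lra)) as [t1 [K1 [HJ1 E1]]].
  destruct (Hpre 2 ltac:(lra)) as [t2 [K2 [HJ2 E2]]].
  destruct (Hpre 3 ltac:(lra)) as [t3 [K3 [HJ3 E3]]].
  destruct (classic (exists th1 th2, J th1 /\ J th2 /\ th1 < t1 < th2)) as [G1|G1];
    [apply (Hgood 1 t1 K1); auto; lra|].
  destruct (classic (exists th1 th2, J th1 /\ J th2 /\ th1 < t2 < th2)) as [G2|G2];
    [apply (Hgood 2 t2 K2); auto; lra|].
  destruct (classic (exists th1 th2, J th1 /\ J th2 /\ th1 < t3 < th2)) as [G3|G3];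
    [apply (Hgood 3 t3 K3); auto; lra|].
  exfalso.
  assert (D12 : 0 < (p + 2 * h) - (p + 1 * h) < 1) by (unfold h in *; lra).
  assert (D13 : 0 < (p + 3 * h) - (p + 1 * h) < 1) by (unfold h in *; lra).
  assert (D23 : 0 < (p + 3 * h) - (p + 2 * h) < 1) by (unfold h in *; lra).
  destruct (minmax J t1 G1) as [M1|M1]; destruct (minmax J t2 G2) as [M2|M2];
    destruct (minmax J t3 G3) as [M3|M3];
    first [ solve [apply (pair_contra J (Nat.iter n G) t1 t2 _ _ K1 K2 E1 E2 D12 HJ1 HJ2); tauto]
          | solve [apply (pair_contra J (Nat.iter n G) t1 t3 _ _ K1 K3 E1 E3 D13 HJ1 HJ3); tauto]
          | solve [apply (pair_contra J (Nat.iter n G) t2 t3 _ _ K2 K3 E2 E3 D23 HJ2 HJ3); tauto] ].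
Qed.
Lemma core n t0 S : 0 <= t0 -> t_curve a b t0 S -> C1_graph a b (img G f n S) ->
  t_curve a b (C * sigma ^ n * t0 + Kc) (img G f n S).
Proof.
  intros Ht0 [J [X [HJi [HJinj [HXC1 [HXab [HXb HS]]]]]]] [J' [X' [HJ'i [HJ'inj [HX'C1 [HX'ab Himg]]]]]].
  assert (HBd : 0 <= C * sigma ^ n * t0 + Kc).
  { pose proof Kc_pos. assert (0 < sigma ^ n) by (apply pow_lt; lra).
    assert (0 <= C * sigma ^ n) by nra. nra. }
  set (Bd := C * sigma ^ n * t0 + Kc) in *.
  destruct (classic (exists s1 s2, J' s1 /\ J' s2 /\ s1 < s2)) as [ND|DG].
  - exists J', X'. do 4 (split; [assumption|]). split; [|exact Himg].
    intros s Hs. apply Rnot_lt_le. intro Hgt.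
    pose proof HX'C1 as [HX'd HX'c].
    destruct (HX'c s Hs (Rabs (Derive X' s) - Bd) ltac:(lra)) as [del [Hdel Hcont]].
    assert (Hs3 : exists s3, J' s3 /\ s3 <> s).
    { destruct ND as [s1 [s2 [H1 [H2 H3]]]].
      destruct (Req_dec s1 s) as [E|E]; [exists s2; split; auto; lra| exists s1; auto]. }
    destruct Hs3 as [s3 [HJs3 Hne]].
    assert (Hfin : forall p q, p < q -> q - p < 1 -> (forall z, p < z < q -> J' z) ->
               s - del <= p -> q <= s + del -> False).
    { intros p q Hpq Hq1 HJ' Hp Hq.
      destruct (density n S J X J' X' HJi HS Himg p q Hpq Hq1 HJ')
        as [s'' [rho [th [th1 [th2 [K [Hs'' [Hrho [Hball [H1 [H2 [H3 E]]]]]]]]]]]].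
      pose proof (good_bound n t0 S J X J' X' HXC1 HXab HXb HS HX'C1 HJ'inj Himg
                    s'' rho th th1 th2 K Hrho Hball HJi H1 H2 H3 E) as HB.
      assert (Hj : J' s'') by (apply Hball; rewrite Rminus_diag, Rabs_R0; exact Hrho).
      assert (Hd : Rabs (s'' - s) < del) by (apply Rabs_lt_between; lra).
      specialize (Hcont s'' Hj Hd).
      pose proof (Rabs_triang_inv (Derive X' s) (Derive X' s'')).
      rewrite Rabs_minus_sym in Hcont. fold Bd in HB. lra. }
    destruct (Rlt_or_le s s3) as [Hlt|Hle].
    + assert (Hd1 : s3 - s < 1) by (apply (diam J' HJ'i HJ'inj); auto; lra).
      apply (Hfin s (Rmin s3 (s + del))).
      * apply Rmin_glb_lt; lra.
      * pose proof (Rmin_l s3 (s + del)). lra.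
      * intros z Hz. pose proof (Rmin_l s3 (s + del)). apply (HJ'i s z s3); auto; lra.
      * lra.
      * apply Rmin_r.
    + assert (Hlt : s3 < s) by lra.
      assert (Hd1 : s - s3 < 1) by (apply (diam J' HJ'i HJ'inj); auto; lra).
      apply (Hfin (Rmax s3 (s - del)) s).
      * apply Rmax_lub_lt; lra.
      * pose proof (Rmax_l s3 (s - del)). lra.
      * intros z Hz. pose proof (Rmax_l s3 (s - del)). apply (HJ'i s3 z s); auto; lra.
      * apply Rmax_r.
      * lra.
  - destruct (classic (exists s0, J' s0)) as [[s0 Hs0]|Hno].
    + assert (Heq : forall s, J' s -> s = s0).
      { intros s Hs. destruct (Rtotal_order s s0) as [H|[H|H]]; auto;
        exfalso; apply DG; [exists s, s0| exists s0, s]; auto. }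
      exists J', (fun _ => X' s0).
      split; [assumption|]. split; [assumption|].
      split; [split|].
      { intros s _. apply ex_derive_const. }
      { intros s _ eps Heps. exists 1. split; [lra|]. intros s' _ _.
        rewrite !Derive_const, Rminus_diag, Rabs_R0. exact Heps. }
      split; [intros s _; apply HX'ab; exact Hs0|].
      split; [intros s _; rewrite Derive_const, Rabs_R0; exact HBd|].
      intros pt. split.
      { intros Hp. apply Himg in Hp. destruct Hp as [s [k [Hs [E1 E2]]]].
        exists s, k. pose proof (Heq s Hs). subst s. auto. }
      { intros Hp. apply Himg. destruct Hp as [s [k [Hs [E1 E2]]]].
        exists s, k. pose proof (Heq s Hs). subst s. auto. }
    + exists J', X'. do 4 (split; [assumption|]). split; [|exact Himg].
      intros s Hs. exfalso. apply Hno. exists s. exact Hs.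
Qed.
End Geo.


Lemma t_curve_mono a b t t' S : t <= t' -> t_curve a b t S -> t_curve a b t' S.
Proof.
  intros Ht [J [X [H1 [H2 [H3 [H4 [H5 H6]]]]]]].
  exists J, X. repeat (split; [assumption|]). split; [|assumption].
  intros s Hs. specialize (H5 s Hs). lra.
Qed.

Theorem proposition6p2 (a b : R) (G : R -> R) (f : R -> R -> R) :
  a < b ->
  (forall (k : nat) (th : R), ex_derive_n G k th) ->
  (exists d : Z, forall th, G (th + 1) = G th + IZR d) ->
  (exists c lam, 0 < c /\ 1 < lam /\
     forall (n : nat) th, c * lam ^ n <= Rabs (Derive (Nat.iter n G) th)) ->
  (forall th x, f (th + 1) x = f th x) ->
  Ck2 3 f ->
  (forall th x, a <= x <= b -> a <= f th x <= b) ->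
  (exists C sigma, 0 < C /\ 0 < sigma < 1 /\
     forall (n : nat) th x, a <= x <= b ->
       fiber_prod G f n (th, x) / Rabs (Derive (Nat.iter n G) th) <= C * sigma ^ n) ->
  exists (alpha : R) (n0 : nat), 0 < alpha /\
    (forall (n : nat) (S : R * R -> Prop), (n0 <= n)%nat ->
       t_curve a b alpha S -> C1_graph a b (img G f n S) ->
       t_curve a b alpha (img G f n S)) /\
    (exists C1 : R, forall (n : nat) (S : R * R -> Prop),
       t_curve a b alpha S -> C1_graph a b (img G f n S) ->
       t_curve a b C1 (img G f n S)).
Proof.
  intros Hab HGsm [d Hd] [c [lam [Hc [Hlam Hexp]]]] Hper HCk Hf [C [sigma [HC [Hsig Hhyp]]]].
  assert (EG : forall t, ex_derive G t) by (intros t; exact (HGsm 1%nat t)).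
  assert (Hcl : 0 < c * lam) by nra.
  assert (Hg : forall t, c * lam <= Rabs (Derive G t)).
  { intros t. pose proof (Hexp 1%nat t) as H. simpl in H. rewrite Rmult_1_r in H. exact H. }
  assert (HDnz : forall n t, Derive (Nat.iter n G) t <> 0).
  { intros n t E. pose proof (Hexp n t) as H. rewrite E, Rabs_R0 in H.
    assert (0 < lam ^ n) by (apply pow_lt; lra). nra. }
  pose proof (diff_f f HCk) as Hdiff.
  pose proof HCk as [_ [Hed [[Hc2 _] _]]].
  destruct (bound_2d (dth f) 0 1 a b Hc2) as [M HM01].
  assert (HM : forall th x, a <= x <= b -> Rabs (dth f th x) <= M).
  { intros th x Hx. destruct (reduce01 th) as [th0 [k [Hth0 E]]]. subst th.
    rewrite (periodic_Z (fun t => dth f t x)).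
    - apply HM01; auto.
    - intros t. apply dth_periodic; auto. intros; apply Hed. }
  assert (HM0 : 0 <= M) by (pose proof (HM 0 a ltac:(lra)); pose proof (Rabs_pos (dth f 0 a)); lra).
  set (K := Kc c lam C sigma M).
  assert (HK : 0 <= K) by (apply Kc_pos; auto; lra).
  assert (Hcore : forall n t0 S, 0 <= t0 -> t_curve a b t0 S -> C1_graph a b (img G f n S) ->
     t_curve a b (C * sigma ^ n * t0 + K) (img G f n S)).
  { intros n t0 S H0 H1 H2. eapply core; eauto. }
  destruct (pow_lt_1_zero sigma ltac:(rewrite Rabs_pos_eq; lra) (/ (2 * C)) ltac:(apply Rinv_0_lt_compat; lra)) as [N HN].
  exists (2 * K + 1), N. split; [lra|]. split.
  - intros n S Hn HS HG.
    apply t_curve_mono with (C * sigma ^ n * (2 * K + 1) + K); [|apply Hcore; auto; lra].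
    specialize (HN n Hn). rewrite Rabs_pos_eq in HN by (apply pow_le; lra).
    assert (C * sigma ^ n < 1 / 2).
    { apply Rmult_lt_compat_l with (r := C) in HN; [|exact HC].
      assert (E : C * / (2 * C) = 1 / 2) by (field; lra). lra. }
    assert (0 <= sigma ^ n) by (apply pow_le; lra).
    nra.
  - exists (C * (2 * K + 1) + K). intros n S HS HG.
    apply t_curve_mono with (C * sigma ^ n * (2 * K + 1) + K); [|apply Hcore; auto; lra].
    assert (sigma ^ n <= 1) by (apply pow_le1; lra).
    assert (0 <= C * (2 * K + 1) * (1 - sigma ^ n)) by (apply Rmult_le_pos; [nra|lra]).
    nra.
Qed.
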